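(* Let $R$ be a commutative ring with $1$, $M$ an le-module over $R$, and suppose the image of the natural map $\psi:\mathrm{Spec}(M)\to\mathrm{Spec}(R/Ann(M))$ is a closed subset of $\mathrm{Spec}(R/Ann(M))$. Then $\mathrm{Spec}(M)$ (with the Zariski topology) is a spectral space if and only if $\psi$ is injective.
   Context: An le-module over $R$ is a complete lattice $(M,\leq)$ with greatest element $e$, with a commutative monoid operation $+$ (identity $0_M$) satisfying $m+\bigvee_{i}m_i=\bigvee_i(m+m_i)$ for all families, and a map $R\times M\to M$, $(r,m)\mapsto rm$, such that for all $r,r_1,r_2\in R$, $m,m_1,m_2,m_i\in M$: $r(m_1+m_2)=rm_1+rm_2$; $(r_1+r_2)m\leq r_1m+r_2m$; $(r_1r_2)m=r_1(r_2m)$; $1_Rm=m$; $0_Rm=r0_M=0_M$; $r(\bigvee_i m_i)=\bigvee_i rm_i$. A submodule element is $n\in M$ with $n+n\leq n$ and $rn\leq n$ for all $r\in R$; it is proper if $n\neq e$. For $n\in M$, $(n:e)=\{r\in R:re\leq n\}$; $Ann(M)=(0_M:e)$. A prime submodule element is a proper submodule element $p$ such that for all $r\in R$, $m\in M$, $rm\leq p$ implies $r\in(p:e)$ or $m\leq p$; $\mathrm{Spec}(M)$ is the set of prime submodule elements. For a submodule element $n$, $V^*(n)=\{p\in\mathrm{Spec}(M):(n:e)\subseteq(p:e)\}$; the Zariski topology on $\mathrm{Spec}(M)$ has closed sets exactly the $V^*(n)$. The natural map is $\psi(p)=(p:e)/Ann(M)$; $\mathrm{Spec}(R/Ann(M))$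 carries its usual Zariski topology. A topological space is spectral if it is $T_0$, quasi-compact, its quasi-compact open subsets are closed under finite intersection and form an open base, and every irreducible closed subset has a generic point. *)

(* Defs.v *)
From mathcomp Require Import all_boot all_algebra.
From Stdlib Require Import List.

Set Implicit Arguments.
Unset Strict Implicit.
Unset Printing Implicit Defensive.

Import GRing.Theory.
Local Open Scope ring_scope.

Record leModule (R : comPzRingType) := LeModule {
  lm_car :> Type;
  lm_le : lm_car -> lm_car -> Prop;
  lm_sup : (lm_car -> Prop) -> lm_car;
  lm_add : lm_car -> lm_car -> lm_car;
  lm_zero : lm_car;
  lm_act : R -> lm_car -> lm_car;
  lm_le_refl : forall x, lm_le x x;
  lm_le_trans : forall x y z, lm_le x y -> lm_le y z -> lm_le x z;
  lm_le_anti : forall x y, lm_le x y -> lm_le y x -> x = y;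
  lm_sup_ub : forall (A : lm_car -> Prop) x, A x -> lm_le x (lm_sup A);
  lm_sup_least : forall (A : lm_car -> Prop) y,
      (forall x, A x -> lm_le x y) -> lm_le (lm_sup A) y;
  lm_addA : forall x y z, lm_add x (lm_add y z) = lm_add (lm_add x y) z;
  lm_addC : forall x y, lm_add x y = lm_add y x;
  lm_add0 : forall x, lm_add lm_zero x = x;
  lm_add_sup : forall (A : lm_car -> Prop) m, (exists x, A x) ->
      lm_add m (lm_sup A) = lm_sup (fun y => exists x, A x /\ y = lm_add m x);
  lm_act_addr : forall r m1 m2, lm_act r (lm_add m1 m2) = lm_add (lm_act r m1) (lm_act r m2);
  lm_act_addl : forall r1 r2 m, lm_le (lm_act (r1 + r2) m) (lm_add (lm_act r1 m) (lm_act r2 m));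
  lm_act_mul : forall r1 r2 m, lm_act (r1 * r2) m = lm_act r1 (lm_act r2 m);
  lm_act1 : forall m, lm_act 1 m = m;
  lm_act0r : forall m, lm_act 0 m = lm_zero;
  lm_act_r0 : forall r, lm_act r lm_zero = lm_zero;
  lm_act_sup : forall r (A : lm_car -> Prop),
      lm_act r (lm_sup A) = lm_sup (fun y => exists x, A x /\ y = lm_act r x)
}.

Arguments lm_zero {R} l.

Section LeModuleDefs.
Variables (R : comPzRingType) (M : leModule R).

Definition lm_top : M := lm_sup (fun _ => True).

Definition submodule_elem (n : M) : Prop :=
  lm_le (lm_add n n) n /\ forall r : R, lm_le (lm_act r n) n.

Definition colon (n : M) : R -> Prop := fun r => lm_le (lm_act r lm_top) n.

Definition Ann : R -> Prop := colon (lm_zero M).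

Definition prime_elem (p : M) : Prop :=
  submodule_elem p /\ p <> lm_top /\
  forall (r : R) (m : M), lm_le (lm_act r m) p -> colon p r \/ lm_le m p.

Definition SpecM : Type := {p : M | prime_elem p}.

Definition Vstar (n : M) : SpecM -> Prop :=
  fun p => forall r, colon n r -> colon (proj1_sig p) r.

Definition zariski_closedM (C : SpecM -> Prop) : Prop :=
  exists n : M, submodule_elem n /\ forall p, C p <-> Vstar n p.

End LeModuleDefs.

Section RingSpec.
Variable S : comPzRingType.

Definition prime_ideal (P : S -> Prop) : Prop :=
  [/\ P 0, (forall x y, P x -> P y -> P (x + y)),
      (forall a x, P x -> P (a * x)), ~ P 1 &
      (forall x y, P (x * y) -> P x \/ P y)].

Definition SpecR : Type := {P : S -> Prop | prime_ideal P}.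

Definition zariski_closedR (C : SpecR -> Prop) : Prop :=
  exists A : S -> Prop, forall P, C P <-> (forall x, A x -> proj1_sig P x).

End RingSpec.

Section Spectral.
Variables (X : Type) (closed : (X -> Prop) -> Prop).

Definition is_open (U : X -> Prop) : Prop := closed (fun x => ~ U x).

Definition quasi_compact (K : X -> Prop) : Prop :=
  forall F : (X -> Prop) -> Prop,
    (forall U, F U -> is_open U) ->
    (forall x, K x -> exists U, F U /\ U x) ->
    exists l : list (X -> Prop),
      (forall U, In U l -> F U) /\ (forall x, K x -> exists U, In U l /\ U x).

Definition T0 : Prop :=
  forall x y : X, x <> y -> exists U, is_open U /\
    ((U x /\ ~ U y) \/ (U y /\ ~ U x)).

Definition irreducible (Z : X -> Prop) : Prop :=
  (exists x, Z x) /\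
  forall C1 C2, closed C1 -> closed C2 ->
    (forall x, Z x -> C1 x \/ C2 x) ->
    (forall x, Z x -> C1 x) \/ (forall x, Z x -> C2 x).

Definition closure1 (x : X) : X -> Prop :=
  fun y => forall C, closed C -> C x -> C y.

Definition spectral : Prop :=
  [/\ T0,
      quasi_compact (fun _ => True),
      (forall U V, is_open U -> quasi_compact U -> is_open V -> quasi_compact V ->
         quasi_compact (fun x => U x /\ V x)),
      (forall U x, is_open U -> U x ->
         exists V, [/\ is_open V, quasi_compact V, V x & forall y, V y -> U y]) &
      (forall Z, closed Z -> irreducible Z ->
         exists x, forall y, Z y <-> closure1 x y)].

End Spectral.

(* The natural map psi : Spec(M) -> Spec(R/Ann(M)), psi(p) = (p:e)/Ann(M). *)
(* R/Ann(M) is represented by any ring S with a surjective ring morphism  *)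
(* pi : R -> S whose kernel is Ann(M); psi(p) is the (prime) ideal        *)
(* pi((p:e)) of S, given here by its underlying subset of S.              *)
Definition psi_set (R S : comPzRingType) (M : leModule R) (pi : R -> S)
  (p : SpecM M) : S -> Prop :=
  fun s => exists r, colon (proj1_sig p) r /\ pi r = s.

Definition psi_image (R S : comPzRingType) (M : leModule R) (pi : R -> S) :
  SpecR S -> Prop :=
  fun P => exists p : SpecM M, forall s, proj1_sig P s <-> psi_set pi p s.

Definition psi_injective (R S : comPzRingType) (M : leModule R) (pi : R -> S) : Prop :=
  forall p q : SpecM M, (forall s, psi_set pi p s <-> psi_set pi q s) -> p = q.

(* Main.v *)
Require Import Defs.
From mathcomp Require Import all_boot all_algebra.
From mathcomp Require Import ring.
From mathcomp Require Import boolp classical_sets.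
From Stdlib Require Import List Classical.
Import GRing.Theory.
Local Open Scope ring_scope.
Set Implicit Arguments.
Unset Strict Implicit.

Section Gen.
Variable R : comPzRingType.

Definition lsum (l : list (R * R)) : R := foldr (fun pr acc => pr.1 * pr.2 + acc) 0 l.
Definition gen (G : R -> Prop) (z : R) : Prop :=
  exists l, (forall pr, In pr l -> G pr.2) /\ z = lsum l.

Lemma gen0 G : gen G 0.
Proof. by exists nil; split. Qed.

Lemma genD G x y : gen G x -> gen G y -> gen G (x + y).
Proof.
move=> [l1 [H1 ->]] [l2 [H2 ->]]; exists (l1 ++ l2); split.
  by move=> pr Hin; case: (in_app_or _ _ _ Hin) => ?; [apply: H1|apply: H2].
by elim: l1 {H1} => [|a l IH] /=; rewrite ?add0r // -IH addrA.
Qed.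

Lemma genM G a x : gen G x -> gen G (a * x).
Proof.
move=> [l [H ->]]; exists (map (fun pr => (a * pr.1, pr.2)) l); split.
  move=> pr Hin; case: (proj1 (in_map_iff _ _ _) Hin) => w [<- Hw]; exact: (H _ Hw).
by elim: l {H} => [|b l IH] /=; rewrite ?mulr0 // -IH mulrDr mulrA.
Qed.

Lemma genIn (G : R -> Prop) t : G t -> gen G t.
Proof.
by move=> Gt; exists ((1, t) :: nil); split => [pr [<-|[]]|] //=; rewrite mul1r addr0.
Qed.

Lemma gen_mono (G G' : R -> Prop) z : (forall t, G t -> G' t) -> gen G z -> gen G' z.
Proof. by move=> HG [l [H ->]]; exists l; split => // pr /H /HG. Qed.

Lemma gen_gen G z : gen (gen G) z -> gen G z.
Proof.
move=> [l [H ->]]; elim: l H => [|[b t] l IH] H /=; first exact: gen0.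
apply: genD; first by apply: genM; apply: (H (b, t)); left.
by apply: IH => pr Hin; apply: H; right.
Qed.

Lemma gen_ext (G : R -> Prop) x z : gen (fun t => G t \/ t = x) z ->
  exists a y, gen G y /\ z = y + a * x.
Proof.
move=> [l [H ->]]; elim: l H => [|[b t] l IH] H /=.
  by exists 0, 0; split; [exact: gen0| rewrite mul0r addr0].
have [|a [y [Gy ->]]] := IH; first by move=> pr Hin; apply: H; right.
case: (H (b, t)); [by left | move=> /= Gt | move=> /= ->].
  exists a, (b * t + y); split; last by rewrite addrA.
  by apply: genD => //; apply: genM; apply: genIn.
exists (b + a), y; split => //; rewrite mulrDl; ring.
Qed.

Lemma exists_prime (T : R -> Prop) (f : R) :
  (forall k, ~ gen T (f ^+ k)) ->
  exists Q, prime_ideal Q /\ (forall r, T r -> Q r) /\ ~ Q f.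
Proof.
move=> HT.
pose P := fun X : set R => forall k, ~ gen (fun t => T t \/ X t) (f ^+ k).
have chain : forall F : set (set R), (F `<=` P)%classic -> total_on F subset ->
    P (\bigcup_(X in F) X)%classic.
  move=> F FP tot k [l [Hl Hk]].
  have key : forall l : list (R * R),
      (forall pr, In pr l -> T pr.2 \/ (\bigcup_(X in F) X)%classic pr.2) ->
      (forall pr, In pr l -> T pr.2) \/
      exists X, F X /\ forall pr, In pr l -> T pr.2 \/ X pr.2.
    elim => [|pr l' IH] H; first by left.
    have [|IHl|[X [FX HX]]] := IH; first by move=> p Hin; apply: H; right.
      case: (H pr (or_introl erefl)) => [Tp|[X0 FX0 X0p]].
        by left => p [<-|/IHl].
      by right; exists X0; split => // p [<-|/IHl]; [right|left].
    case: (H pr (or_introl erefl)) => [Tp|[X0 FX0 X0p]].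
      by right; exists X; split => // p [<-|/HX]; [left|].
    case: (tot _ _ FX0 FX) => [sub|sub].
      right; exists X; split => // p [<-|/HX //]; right; exact: sub.
    right; exists X0; split => // p [<-|/HX [|/sub]]; by [right|left|right].
  case: (key l Hl) => [HlT|[X [FX HX]]].
    by apply: (HT k); exists l.
  by apply: (FP X FX k); exists l.
have [A [PA Amax]] := Zorn_bigcup chain.
pose Q := gen (fun t => T t \/ A t).
have QQ : forall z, gen Q z -> Q z by move=> z; apply: gen_gen.
exists Q; split; last split.
- split.
  + exact: gen0.
  + by move=> x y; apply: genD.
  + by move=> a x; apply: genM.
  + by move=> Q1; apply: (PA 0); rewrite expr0.
  + move=> x y Qxy.
    have step : forall z, ~ Q z -> exists k a y1, Q y1 /\ f ^+ k = y1 + a * z.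
      move=> z nQz.
      have : ~ P (fun t => A t \/ t = z).
        apply: Amax; split; first by move=> t At; left.
        by move=> /(_ z (or_intror erefl)) Az; apply: nQz; apply: genIn; right.
      move=> /not_all_ex_not [k /NNPP Hk]; exists k.
      have Hk2 : gen (fun t => Q t \/ t = z) (f ^+ k).
        apply: gen_mono Hk => t [Tt|[At|->]];
          [by left; apply: genIn; left | by left; apply: genIn; right | by right].
      have [a [y1 [Gy1 E]]] := @gen_ext Q z (f ^+ k) Hk2.
      by exists a, y1; split => //; apply: QQ.
    apply: NNPP => /not_or_and [nQx nQy].
    have [k [a [y1 [Qy1 Ek]]]] := step x nQx.
    have [m [b [y2 [Qy2 Em]]]] := step y nQy.
    apply: (PA (k + m)%N); rewrite exprD Ek Em.
    have -> : (y1 + a * x) * (y2 + b * y) =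
              y1 * y2 + (b * y) * y1 + (a * x) * y2 + (a * b) * (x * y) by ring.
    by apply: genD; [apply: genD; [apply: genD|]|]; apply: genM.
- by move=> r Tr; apply: genIn; left.
- by move=> Qf; apply: (PA 1%N); rewrite expr1.
Qed.

End Gen.

Section PI.
Variables (S : comPzRingType) (P : S -> Prop) (h : prime_ideal P).
Lemma pid0 : P 0. Proof. by case: h. Qed.
Lemma pidD x y : P x -> P y -> P (x + y). Proof. by case: h => _ H _ _ _; apply: H. Qed.
Lemma pidM a x : P x -> P (a * x). Proof. by case: h => _ _ H _ _; apply: H. Qed.
Lemma pid1 : ~ P 1. Proof. by case: h. Qed.
Lemma pidP x y : P (x * y) -> P x \/ P y. Proof. by case: h => _ _ _ _ H; apply: H. Qed.
End PI.
Section Mod.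
Variables (R : comPzRingType) (M : leModule R).
Local Notation le := (@lm_le R M).

Lemma sup_eq (A : M -> Prop) y : A y -> (forall x, A x -> le x y) -> lm_sup A = y.
Proof.
move=> Ay H; apply: lm_le_anti; first exact: lm_sup_least.
exact: lm_sup_ub.
Qed.

Lemma add_mono (m x y : M) : le x y -> le (lm_add m x) (lm_add m y).
Proof.
move=> xy.
have E := @lm_add_sup R M (fun z => z = x \/ z = y) m (ex_intro _ x (or_introl erefl)).
rewrite (@sup_eq _ y) in E; last by move=> z [->|->] //; exact: lm_le_refl.
  rewrite E; apply: lm_sup_ub; exists x; split => //; by left.
by right.
Qed.

Lemma add_mono2 (x x' y y' : M) : le x x' -> le y y' -> le (lm_add x y) (lm_add x' y').
Proof.
move=> h1 h2; apply: lm_le_trans (add_mono x h2) _.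
rewrite (lm_addC x y') (lm_addC x' y'); exact: add_mono.
Qed.

Lemma act_mono r (x y : M) : le x y -> le (lm_act r x) (lm_act r y).
Proof.
move=> xy.
have E := @lm_act_sup R M r (fun z => z = x \/ z = y).
rewrite (@sup_eq _ y) in E; last by move=> z [->|->] //; exact: lm_le_refl.
  rewrite E; apply: lm_sup_ub; exists x; split => //; by left.
by right.
Qed.

Lemma le_top (x : M) : le x (lm_top M).
Proof. exact: lm_sup_ub. Qed.

Lemma zero_le (p : M) : submodule_elem p -> le (lm_zero M) p.
Proof. by move=> [_ H]; rewrite -(lm_act0r p); apply: H. Qed.

Lemma colon0 (n : M) : submodule_elem n -> colon n 0.
Proof. by move=> sn; rewrite /colon lm_act0r; apply: zero_le. Qed.

Lemma colonD (n : M) x y : submodule_elem n -> colon n x -> colon n y -> colon n (x + y).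
Proof.
move=> sn hx hy; apply: lm_le_trans (lm_act_addl _ _ _) _.
apply: lm_le_trans (add_mono2 hx hy) _; exact: sn.1.
Qed.

Lemma colonM (n : M) a x : submodule_elem n -> colon n x -> colon n (a * x).
Proof.
move=> sn hx; rewrite /colon lm_act_mul.
apply: lm_le_trans (act_mono a hx) _; exact: sn.2.
Qed.

Lemma colon_Ann (n : M) r : submodule_elem n -> Ann M r -> colon n r.
Proof. by move=> sn h; apply: lm_le_trans h _; apply: zero_le. Qed.

Lemma prime_sub (p : M) : prime_elem p -> submodule_elem p.
Proof. by case. Qed.

Lemma prime_not1 (p : M) : prime_elem p -> ~ colon p 1.
Proof.
move=> [_ [ne _]]; rewrite /colon lm_act1 => h; apply: ne.
by apply: lm_le_anti => //; apply: le_top.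
Qed.

Lemma prime_mul (p : M) x y : prime_elem p -> colon p (x * y) -> colon p x \/ colon p y.
Proof.
move=> [_ [_ H]]; rewrite /colon lm_act_mul => h.
by case: (H _ _ h) => ?; [left|right].
Qed.

Lemma colon_prime (p : M) : prime_elem p -> prime_ideal (colon p).
Proof.
move=> pp; have sp := prime_sub pp; split.
- exact: colon0.
- by move=> x y; apply: colonD.
- by move=> a x; apply: colonM.
- exact: prime_not1.
- by move=> x y; apply: prime_mul.
Qed.

Definition nT (T : R -> Prop) : M :=
  lm_sup (fun x => forall n, submodule_elem n ->
     (forall t, T t -> le (lm_act t (lm_top M)) n) -> le x n).

Lemma nT_sub (T : R -> Prop) : submodule_elem (nT T).
Proof.
split.
- apply: lm_sup_ub => n sn H.
  apply: lm_le_trans (add_mono2 _ _) sn.1; apply: lm_sup_least => x; exact.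
- move=> r; apply: lm_sup_ub => n sn H.
  apply: lm_le_trans (act_mono r _) (sn.2 r); apply: lm_sup_least => x; exact.
Qed.

Lemma nT_spec (T : R -> Prop) (q : SpecM M) :
  Vstar (nT T) q <-> (forall t, T t -> colon (proj1_sig q) t).
Proof.
split.
- move=> H t Tt; apply: H; rewrite /colon; apply: lm_sup_ub => n sn Hn; exact: Hn.
- move=> H r hr; apply: lm_le_trans hr _; apply: lm_sup_least => x; apply.
    exact: prime_sub (proj2_sig q).
  exact: H.
Qed.

Lemma closed_V (T : R -> Prop) : zariski_closedM (M := M) (fun q => forall t, T t -> colon (proj1_sig q) t).
Proof.
exists (nT T); split; first exact: nT_sub.
by move=> q; rewrite nT_spec.
Qed.

End Mod.

Section Topo.
Variables (R : comPzRingType) (M : leModule R).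
Local Notation X := (SpecM M).
Local Notation closed := (zariski_closedM (M := M)).
Definition Cq (q : X) : R -> Prop := colon (proj1_sig q).
Variable B' : R -> Prop.
Hypothesis K1 : forall q r, B' r -> Cq q r.
Hypothesis K2 : forall Q, prime_ideal Q -> (forall r, B' r -> Q r) ->
  exists q, forall r, Cq q r <-> Q r.

Definition Dset (f : R) : X -> Prop := fun q => ~ Cq q f.

Lemma Cq_prime q : prime_ideal (Cq q).
Proof. exact: colon_prime (proj2_sig q). Qed.

Lemma closed_ext (C1 C2 : X -> Prop) : closed C1 -> (forall x, C1 x <-> C2 x) -> closed C2.
Proof.
move=> [n [sn H]] E; exists n; split => // p; rewrite -E; exact: H.
Qed.

Lemma open_ext (U1 U2 : X -> Prop) : is_open closed U1 -> (forall x, U1 x <-> U2 x) ->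
  is_open closed U2.
Proof.
move=> h E; apply: closed_ext h _ => x; rewrite E; tauto.
Qed.

Lemma qc_ext (K1' K2' : X -> Prop) : quasi_compact closed K1' ->
  (forall x, K1' x <-> K2' x) -> quasi_compact closed K2'.
Proof.
move=> h E F Fo Fc; have [|l [H1 H2]] := h F Fo.
  by move=> x /E; apply: Fc.
by exists l; split => // x /E; apply: H2.
Qed.

Lemma closed_pt (f : R) : closed (fun q => Cq q f).
Proof.
apply: closed_ext (@closed_V R M (fun t => t = f)) _ => q; split.
  by move=> H; apply: H.
by move=> H t ->.
Qed.

Lemma open_D f : is_open closed (Dset f).
Proof.
apply: closed_ext (@closed_pt f) _ => q; rewrite /Dset; split.
  by move=> h h'.
exact: NNPP.
Qed.

Lemma open_char U : is_open closed U -> exists n : M, submodule_elem n /\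
  forall q, U q <-> exists r, colon n r /\ ~ Cq q r.
Proof.
move=> [n [sn H]]; exists n; split => // q; split.
  move=> Uq; apply: NNPP => hn; apply: (proj2 (H q)) Uq.
  move=> r hr; apply: NNPP => hc; apply: hn; exists r; split => //.
move=> [r [hr hc]]; apply: NNPP => nU; apply: hc; exact: (proj1 (H q) nU).
Qed.

Lemma Cq_pow q f k : Cq q (f ^+ k) -> Cq q f.
Proof.
elim: k => [|k IH]; first by rewrite expr0 => h; case: (prime_not1 (proj2_sig q) h).
rewrite exprS => /(prime_mul (proj2_sig q)) [] //; exact: IH.
Qed.

Lemma qc_D f : quasi_compact closed (Dset f).
Proof.
move=> F Fo Fc.
pose T := fun r => B' r \/ exists U, F U /\ forall q, ~ U q -> Cq q r.
case: (classic (exists k, gen T (f ^+ k))) => [[k [l [Hl Hk]]]|Hn].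
  have : exists lu, (forall U, In U lu -> F U) /\
      forall q, (forall U, In U lu -> ~ U q) -> Cq q (lsum l).
    elim: l Hl {Hk} => [|[b t] l IH] Hl /=.
      exists nil; split => // q _; exact: (pid0 (Cq_prime q)).
    have [|lu [H1 H2]] := IH; first by move=> pr h; apply: Hl; right.
    case: (Hl (b, t) (or_introl erefl)) => /= [Bt|[U [FU HU]]].
      exists lu; split => // q h; apply: (pidD (Cq_prime q)); last exact: H2.
      by apply: (pidM (Cq_prime q)); apply: K1.
    exists (U :: lu); split; first by move=> U' [<-|/H1].
    move=> q h; apply: (pidD (Cq_prime q)); last by apply: H2 => U' h'; apply: h; right.
    by apply: (pidM (Cq_prime q)); apply: HU; apply: h; left.
  move=> [lu [H1 H2]]; exists lu; split => // q Dq.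
  apply: NNPP => hn; apply: Dq; apply: (@Cq_pow q f k); rewrite Hk; apply: H2.
  by move=> U hU Uq; apply: hn; exists U.
have Hn' : forall k, ~ gen T (f ^+ k) by move=> k hk; apply: Hn; exists k.
have [Q [PQ [TQ nQf]]] := exists_prime Hn'.
have [q Hq] := K2 PQ (fun r h => TQ r (or_introl h)).
have Dq : Dset f q by move=> /Hq.
have [U [FU Uq]] := Fc q Dq.
have [n [_ Hn2]] := open_char (Fo U FU).
have [r [hr hc]] := proj1 (Hn2 q) Uq.
exfalso; apply: hc; apply/Hq; apply: TQ; right; exists U; split => // q' nU.
apply: NNPP => hc'; apply: nU; apply/Hn2; exists r; split => //.
Qed.

Lemma D_mul r s q : Dset (r * s) q <-> Dset r q /\ Dset s q.
Proof.
rewrite /Dset; split.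
  move=> h; split => h'; apply: h.
    by rewrite mulrC; apply: (pidM (Cq_prime q)).
  by apply: (pidM (Cq_prime q)).
move=> [h1 h2] /(prime_mul (proj2_sig q)) [] //.
Qed.

Lemma qc_union (K : X -> Prop) (lk : list (X -> Prop)) :
  (forall K', In K' lk -> quasi_compact closed K' /\ forall x, K' x -> K x) ->
  (forall x, K x -> exists K', In K' lk /\ K' x) -> quasi_compact closed K.
Proof.
move=> Hlk Hc F Fo Fc.
have : exists l, (forall U, In U l -> F U) /\
    forall K', In K' lk -> forall x, K' x -> exists U, In U l /\ U x.
  elim: lk Hlk {Hc} => [|K0 lk IH] Hlk; first by exists nil; split.
  have [|l [H1 H2]] := IH; first by move=> K' h; apply: Hlk; right.
  have [qc0 sub0] := Hlk K0 (or_introl erefl).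
  have [|l0 [H01 H02]] := qc0 F Fo; first by move=> x /sub0; apply: Fc.
  exists (l0 ++ l); split.
    by move=> U hU; case: (in_app_or _ _ _ hU) => [/H01|/H1].
  move=> K' [<-|hK'] x hx.
    by have [U [hU Ux]] := H02 x hx; exists U; split => //; apply: in_or_app; left.
  by have [U [hU Ux]] := H2 K' hK' x hx; exists U; split => //; apply: in_or_app; right.
move=> [l [H1 H2]]; exists l; split => // x Kx.
have [K' [hK' K'x]] := Hc x Kx; exact: H2 hK' x K'x.
Qed.

Lemma open_cover U : is_open closed U -> quasi_compact closed U ->
  exists l : list (X -> Prop),
    (forall U', In U' l -> (exists r, forall q, U' q <-> Dset r q) /\ (forall q, U' q -> U q)) /\
    (forall q, U q -> exists U', In U' l /\ U' q).
Proof.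
move=> Uo Uqc; have [n [sn Hn]] := open_char Uo.
pose F := fun U' : X -> Prop => exists r, colon n r /\ forall q, U' q <-> Dset r q.
have [||l [H1 H2]] := Uqc F.
- move=> U' [r [_ E]]; apply: open_ext (@open_D r) _ => q; by rewrite E.
- move=> q /Hn [r [hr hc]]; exists (Dset r); split => //; exists r; split => //.
exists l; split => // U' hU'; have [r [hr E]] := H1 U' hU'; split; first by exists r.
move=> q /E Dq; apply/Hn; exists r; split => //.
Qed.

Lemma qc_inter U V : is_open closed U -> quasi_compact closed U ->
  is_open closed V -> quasi_compact closed V ->
  quasi_compact closed (fun x => U x /\ V x).
Proof.
move=> Uo Uqc Vo Vqc.
have [l1 [H11 H12]] := open_cover Uo Uqc.
have [l2 [H21 H22]] := open_cover Vo Vqc.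
apply: (@qc_union _ (flat_map (fun U1 => map (fun V1 => fun x => U1 x /\ V1 x) l2) l1)).
  move=> K' /in_flat_map [U1 [hU1 /in_map_iff [V1 [<- hV1]]]].
  have [[r Er] sU] := H11 U1 hU1; have [[s Es] sV] := H21 V1 hV1.
  split; last by move=> x [/sU ? /sV ?].
  apply: qc_ext (@qc_D (r * s)) _ => x; rewrite D_mul Er Es; tauto.
move=> x [/H12 [U1 [hU1 U1x]] /H22 [V1 [hV1 V1x]]].
exists (fun x => U1 x /\ V1 x); split => //.
apply/in_flat_map; exists U1; split => //; apply/in_map_iff; exists V1; split => //.
Qed.

Lemma T0_inj : T0 closed -> forall q q', (forall r, Cq q r <-> Cq q' r) -> q = q'.
Proof.
move=> h q q' E; apply: NNPP => ne; have [U [Uo HU]] := h q q' ne.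
have [n [_ Hn]] := open_char Uo.
have E' : U q <-> U q'.
  split => /Hn [r [hr hc]]; apply/Hn; exists r; split => // /E //.
tauto.
Qed.

Hypothesis inj : forall q q', (forall r, Cq q r <-> Cq q' r) -> q = q'.

Lemma spectral_M : spectral closed.
Proof.
split.
- move=> x y ne.
  have [r hr] : exists r, ~ (Cq x r <-> Cq y r).
    by apply: NNPP => h; apply: ne; apply: inj => r; apply: NNPP => h'; apply: h; exists r.
  exists (Dset r); split; first exact: open_D.
  case: (classic (Cq x r)) => hx; [right|left]; rewrite /Dset; tauto.
- apply: qc_ext (@qc_D 1) _ => q; split => // _; exact: prime_not1 (proj2_sig q).
- by move=> U V Uo Uqc Vo Vqc; apply: qc_inter.
- move=> U x Uo Ux; have [n [sn Hn]] := open_char Uo.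
  have [r [hr hc]] := proj1 (Hn x) Ux.
  exists (Dset r); split => //; [exact: open_D | exact: qc_D |].
  by move=> y Dy; apply/Hn; exists r.
- move=> Z ZC [[x0 Zx0] Hirr].
  have [n [sn HZ]] := ZC.
  pose Q := fun r => forall p, Z p -> Cq p r.
  have PQ : prime_ideal Q.
    split.
    + by move=> p _; exact: (pid0 (Cq_prime p)).
    + by move=> a b ha hb p Zp; apply: (pidD (Cq_prime p)); [apply: ha|apply: hb].
    + by move=> a b hb p Zp; apply: (pidM (Cq_prime p)); apply: hb.
    + by move=> h; apply: (prime_not1 (proj2_sig x0)); apply: h.
    + move=> a b hab.
      have [h|h] := Hirr _ _ (@closed_pt a) (@closed_pt b)
                     (fun p Zp => prime_mul (proj2_sig p) (hab p Zp)).
        by left. by right.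
  have [q0 Hq0] := K2 PQ (fun r h p _ => K1 p h).
  have Zq0 : Z q0.
    apply/HZ => r hr; apply/Hq0 => p Zp; exact: (proj1 (HZ p) Zp r hr).
  exists q0 => y; split.
    move=> Zy C0 [n' [_ Hn']] Cq0; apply/Hn' => r hr.
    by apply: (proj1 (Hq0 r) (proj1 (Hn' q0) Cq0 r hr)).
  by move=> H; apply: H.
Qed.

End Topo.

Section Main.
Variables (R S : comPzRingType) (M : leModule R) (pi : {rmorphism R -> S}).
Hypothesis pi_surj : forall s : S, exists r : R, pi r = s.
Hypothesis pi_ker : forall r : R, pi r = 0%R <-> Ann M r.

Definition img (Q : R -> Prop) : S -> Prop := fun s => exists r, Q r /\ pi r = s.

Lemma img_pi (Q : R -> Prop) r : prime_ideal Q -> (forall r, Ann M r -> Q r) ->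
  img Q (pi r) <-> Q r.
Proof.
move=> PQ AQ; split; last by move=> h; exists r.
move=> [r' [hr' e]].
have hd : Q (r - r').
  by apply: AQ; apply/pi_ker; rewrite rmorphB e subrr.
by rewrite -(subrK r' r); apply: pidD.
Qed.

Lemma img_prime (Q : R -> Prop) : prime_ideal Q -> (forall r, Ann M r -> Q r) ->
  prime_ideal (img Q).
Proof.
move=> PQ AQ; split.
- by exists 0; split; [apply: pid0|rewrite rmorph0].
- move=> _ _ [a [ha <-]] [b [hb <-]]; exists (a + b); split; last by rewrite rmorphD.
  exact: pidD.
- move=> x _ [b [hb <-]]; have [a <-] := pi_surj x.
  by exists (a * b); split; [apply: pidM|rewrite rmorphM].
- by rewrite -(rmorph1 pi) img_pi //; apply: pid1.
- move=> x y; have [a <-] := pi_surj x; have [b <-] := pi_surj y.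
  by rewrite -rmorphM !img_pi //; apply: pidP.
Qed.

Lemma Ann_Cq (q : SpecM M) r : Ann M r -> Cq q r.
Proof. by apply: colon_Ann; apply: prime_sub (proj2_sig q). Qed.

Lemma psi_pi (q : SpecM M) r : psi_set pi q (pi r) <-> Cq q r.
Proof. exact: (@img_pi (Cq q) r (Cq_prime q) (@Ann_Cq q)). Qed.

End Main.

Theorem theorem7p3 (R S : comPzRingType) (M : leModule R)
  (pi : {rmorphism R -> S})
  (pi_surj : forall s : S, exists r : R, pi r = s)
  (pi_ker : forall r : R, pi r = 0%R <-> Ann M r)
  (img_closed : zariski_closedR (psi_image M pi)) :
  spectral (zariski_closedM (M := M)) <-> psi_injective M pi.
Proof.
have [A HA] := img_closed.
pose B' := fun r => Ann M r \/ A (pi r).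
have K1 : forall (q : SpecM M) r, B' r -> Cq q r.
  move=> q r; rewrite /B' => -[h|h]; first exact: Ann_Cq.
  pose P : SpecR S := exist _ (psi_set pi q) (img_prime pi_surj pi_ker (Cq_prime q) (@Ann_Cq _ _ q)).
  have : psi_image M pi P by exists q.
  by move=> /HA /(_ _ h) /psi_pi; apply.
have K2 : forall Q : R -> Prop, prime_ideal Q -> (forall r, B' r -> Q r) ->
    exists q : SpecM M, forall r, Cq q r <-> Q r.
  move=> Q PQ BQ.
  have AQ : forall r, Ann M r -> Q r by move=> r h; apply: BQ; left.
  pose P : SpecR S := exist _ (img pi Q) (img_prime pi_surj pi_ker PQ AQ).
  have [q Hq] : psi_image M pi P.
    apply/HA => x; have [r <-] := pi_surj x => h; exists r; split => //.
    by apply: BQ; right.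
  exists q => r; rewrite -(psi_pi pi_ker) -(Hq (pi r)) /=; exact: img_pi.
split.
- move=> [h0 _ _ _ _] p q H; apply: (T0_inj h0) => r.
  by rewrite -!(psi_pi pi_ker).
- move=> inj; apply: (spectral_M K1 K2) => q q' E; apply: inj => s.
  have [r <-] := pi_surj s; rewrite !(psi_pi pi_ker); exact: E.
Qed.
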